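(* For any integer $n \geq 2$ and any integer $m \geq n$ there are $n+1$ translates $A_0, A_1, \dots, A_n$ of the set $D_n^m$ (defined below) whose interiors are pairwise disjoint, but such that $A_0$ touches every $A_i$ for $1 \leq i \leq n$ (i.e. $A_0 \cap A_i \neq \emptyset$). In particular, for every $n > 0$ there is a planar topological disk $A_0$ and $n$ translates $A_1,\dots,A_n$ of it such that $A_0,\dots,A_n$ have pairwise disjoint interiors and each $A_i$ ($1\le i\le n$) touches $A_0$.
   Context: Let $s_1, s_2, \dots$ be the sequence with $s_i = 1 + \nu_2(i)$, where $\nu_2(i)$ is the exponent of $2$ in the prime factorization of $i$ (so $s_i$ is the position, counted from the right, of the lowest $1$ bit of $i$ in binary; the sequence begins $1,2,1,3,1,2,1,4,\dots$). For $i \geq 1$ put $y_i = \sum_{j=1}^{i-1} s_j$ (so $y_1 = 0$). For integers $m \geq 2$, $n \geq 1$, define the bars $B_i = [(i-1)m,\, im] \times [y_i,\, y_i + 1]$ for $1 \leq i \leq 2^n$, and the connectors $V_i = [im-1,\, im] \times [y_i + 1,\, y_{i+1} + 1]$ for $1 \leq i \leq 2^n - 1$. Define $D_n^m = \bigcup_{i=1}^{2^n} B_i \cup \bigcup_{i=1}^{2^n-1} V_i \subset \mathbb{R}^2$; this is a topological disk (Jordan region). Two sets touch if they intersect; here the touching translates have disjoint interiors. *)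

(* Defs.v *)
From Stdlib Require Import Reals Lra Lia Arith Bool.
Open Scope R_scope.

(* 2-adic valuation nu_2(i) (for i >= 1), computed with fuel i (nu_2 i <= i). *)
Fixpoint nu2_aux (fuel i : nat) : nat :=
  match fuel with
  | O => O
  | S f => if andb (0 <? i)%nat (i mod 2 =? 0)%nat then S (nu2_aux f (i / 2)) else O
  end.
Definition nu2 (i : nat) : nat := nu2_aux i i.

Definition s_seq (i : nat) : nat := S (nu2 i).

Fixpoint ssum (k : nat) : nat :=
  match k with
  | O => O
  | S k' => (ssum k' + s_seq (S k'))%nat
  end.

Definition y_seq (i : nat) : nat := ssum (i - 1).

Definition in_bar (m i : nat) (p : R * R) : Prop :=
  INR (i - 1) * INR m <= fst p <= INR i * INR m /\
  INR (y_seq i) <= snd p <= INR (y_seq i) + 1.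

Definition in_conn (m i : nat) (p : R * R) : Prop :=
  INR i * INR m - 1 <= fst p <= INR i * INR m /\
  INR (y_seq i) + 1 <= snd p <= INR (y_seq (S i)) + 1.

Definition Dnm (n m : nat) (p : R * R) : Prop :=
  exists i : nat,
    ((1 <= i <= 2 ^ n)%nat /\ in_bar m i p) \/
    ((1 <= i <= 2 ^ n - 1)%nat /\ in_conn m i p).

Definition translate (A : R * R -> Prop) (t : R * R) (p : R * R) : Prop :=
  A (fst p - fst t, snd p - snd t).

Definition interior2 (A : R * R -> Prop) (p : R * R) : Prop :=
  exists eps : R, 0 < eps /\
    forall q : R * R,
      (fst q - fst p)^2 + (snd q - snd p)^2 < eps^2 -> A q.

(* Main.v *)
Require Import Defs.
From Stdlib Require Import Reals Lra Lia Arith Bool ZArith.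

Local Lemma nu2_aux_fuel : forall f i f', (i <= f)%nat -> (i <= f')%nat -> nu2_aux f i = nu2_aux f' i.
Proof.
  induction f; intros i f' H1 H2.
  - assert (i = 0%nat) by lia; subst. destruct f'; reflexivity.
  - destruct f'.
    + assert (i = 0%nat) by lia; subst. reflexivity.
    + cbn [nu2_aux]. destruct ((0 <? i) && (i mod 2 =? 0))%bool eqn:E; [|reflexivity].
      apply andb_prop in E as [E _]. apply Nat.ltb_lt in E.
      assert (i / 2 < i)%nat by (apply Nat.div_lt; lia).
      f_equal. apply IHf; lia.
Qed.

Local Lemma nu2_even : forall k, (1 <= k)%nat -> nu2 (2*k) = S (nu2 k).
Proof.
  intros k Hk. unfold nu2.
  assert (H : (2*k = S (2*k-1))%nat) by lia. rewrite H at 1. cbn [nu2_aux].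
  assert (E: ((0 <? 2*k) && (2*k mod 2 =? 0))%bool = true).
  { apply andb_true_intro; split. apply Nat.ltb_lt; lia.
    apply Nat.eqb_eq. rewrite Nat.mul_comm. apply Nat.Div0.mod_mul. }
  rewrite E. f_equal.
  assert (E2: (2*k/2 = k)%nat) by (rewrite Nat.mul_comm; apply Nat.div_mul; lia).
  rewrite E2. apply nu2_aux_fuel; lia.
Qed.

Local Lemma nu2_odd : forall k, nu2 (2*k+1) = 0%nat.
Proof.
  intros k. unfold nu2.
  assert (H : (2*k+1 = S (2*k))%nat) by lia. rewrite H at 1. cbn [nu2_aux].
  assert (E: ((2*k+1) mod 2 =? 0)%nat = false).
  { apply Nat.eqb_neq. rewrite Nat.add_comm, Nat.mul_comm, Nat.Div0.mod_add. simpl. lia. }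
  rewrite E, andb_false_r. reflexivity.
Qed.

Local Lemma s_even : forall k, (1 <= k)%nat -> s_seq (2*k) = S (s_seq k).
Proof. intros. unfold s_seq. rewrite nu2_even; auto. Qed.
Local Lemma s_odd : forall k, s_seq (2*k+1) = 1%nat.
Proof. intros. unfold s_seq. rewrite nu2_odd; auto. Qed.

Local Lemma F_S : forall k, ssum (S k) = (ssum k + s_seq (S k))%nat.
Proof. reflexivity. Qed.

Local Lemma F_evenodd : forall k, ssum (2*k) = (ssum k + 2*k)%nat /\ ssum (2*k+1) = (ssum k + 2*k+1)%nat.
Proof.
  induction k.
  - simpl. split; reflexivity.
  - destruct IHk as [H1 H2].
    assert (E1 : (2 * S k = S (2*k+1))%nat) by lia.
    assert (E2 : (2 * S k + 1 = S (2 * S k))%nat) by lia.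
    assert (Hs1 : s_seq (2 * S k) = S (s_seq (S k))) by (apply s_even; lia).
    assert (Hs2 : s_seq (2 * S k + 1) = 1%nat) by apply s_odd.
    split.
    + rewrite E1, F_S, H2, <- E1, Hs1, F_S. lia.
    + rewrite E2, F_S, <- E2, Hs2, E1, F_S, H2, <- E1, Hs1, F_S. lia.
Qed.

Local Lemma F_even : forall k, ssum (2*k) = (ssum k + 2*k)%nat.
Proof. intros; apply F_evenodd. Qed.
Local Lemma F_odd : forall k, ssum (2*k+1) = (ssum k + 2*k+1)%nat.
Proof. intros; apply F_evenodd. Qed.

Local Lemma F_mono : forall a b, (a <= b)%nat -> (ssum a <= ssum b)%nat.
Proof.
  intros a b H. induction H. lia. rewrite F_S. lia.
Qed.

Local Lemma F_super : forall N u L, (u + L <= N)%nat -> (ssum u + ssum L <= ssum (u + L))%nat.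
Proof.
  induction N; intros u L H.
  - assert (u = 0%nat) by lia; assert (L = 0%nat) by lia; subst. simpl. lia.
  - destruct (Nat.Even_or_Odd u) as [[a Ha]|[a Ha]];
    destruct (Nat.Even_or_Odd L) as [[b Hb]|[b Hb]]; subst.
    + assert (IH := IHN a b ltac:(lia)).
      replace (2*a + 2*b)%nat with (2*(a+b))%nat by lia. rewrite !F_even. lia.
    + assert (IH := IHN a b ltac:(lia)).
      replace (2*a + (2*b+1))%nat with (2*(a+b)+1)%nat by lia. rewrite F_even, !F_odd. lia.
    + assert (IH := IHN a b ltac:(lia)).
      replace (2*a + 1 + 2*b)%nat with (2*(a+b)+1)%nat by lia. rewrite F_even, !F_odd. lia.
    + assert (IH := IHN a b ltac:(lia)).
      assert (M := F_mono (a+b) (a+b+1) ltac:(lia)).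
      replace (2*a + 1 + (2*b+1))%nat with (2*(a+b+1))%nat by lia. rewrite F_even, !F_odd. lia.
Qed.

Local Lemma F_sup : forall u L, (ssum u + ssum L <= ssum (u + L))%nat.
Proof. intros; eapply F_super; eauto. Qed.

Local Lemma F_align : forall r q L, (L < 2^r)%nat -> ssum (q * 2^r + L) = (ssum (q * 2^r) + ssum L)%nat.
Proof.
  induction r; intros q L H.
  - simpl in H. assert (L = 0%nat) by lia. subst. rewrite Nat.add_0_r. cbn [ssum]. lia.
  - rewrite Nat.pow_succ_r'. 
    destruct (Nat.Even_or_Odd L) as [[l Hl]|[l Hl]]; subst; rewrite Nat.pow_succ_r' in H.
    + assert (l < 2^r)%nat by lia.
      replace (q * (2 * 2^r) + 2*l)%nat with (2*(q*2^r + l))%nat by lia.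
      replace (q * (2 * 2^r))%nat with (2*(q*2^r))%nat by lia.
      rewrite !F_even, IHr by lia. lia.
    + assert (l < 2^r)%nat by lia.
      replace (q * (2 * 2^r) + (2*l+1))%nat with (2*(q*2^r + l)+1)%nat by lia.
      replace (q * (2 * 2^r))%nat with (2*(q*2^r))%nat by lia.
      rewrite F_even, !F_odd, IHr by lia. lia.
Qed.

Local Lemma s_bound : forall r j, (1 <= j)%nat -> (j < 2^r)%nat -> (s_seq j <= r)%nat.
Proof.
  induction r; intros j H1 H2.
  - simpl in H2. lia.
  - rewrite Nat.pow_succ_r' in H2.
    destruct (Nat.Even_or_Odd j) as [[k Hk]|[k Hk]]; subst.
    + rewrite s_even by lia. assert (s_seq k <= r)%nat by (apply IHr; lia). lia.
    + rewrite s_odd. lia.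
Qed.

Local Lemma s_pow : forall r, s_seq (2^r) = S r.
Proof.
  induction r.
  - reflexivity.
  - rewrite Nat.pow_succ_r', s_even. rewrite IHr; reflexivity.
    assert (2^r <> 0)%nat by (apply Nat.pow_nonzero; lia). lia.
Qed.
Open Scope Z_scope.

Definition cellP (n m : nat) (Z W : Z) : Prop :=
  exists i0 : nat, (i0 < 2^n)%nat /\
    (Z.of_nat i0 * Z.of_nat m <= Z <= Z.of_nat i0 * Z.of_nat m + Z.of_nat m - 1) /\
    (Z.of_nat (ssum i0) <= W) /\
    (W = Z.of_nat (ssum i0) \/
     ((S i0 < 2^n)%nat /\ Z = Z.of_nat i0 * Z.of_nat m + Z.of_nat m - 1 /\
      W <= Z.of_nat (ssum (S i0)))).

Local Lemma idx (m i1 i2 C d Z1 Z2 : Z) : 0 < m ->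
  i1*m <= Z1 <= i1*m + m - 1 -> i2*m <= Z2 <= i2*m+m-1 ->
  Z1 = Z2 + C*m + d -> 0 <= d <= m - 1 ->
  (i1 = i2 + C /\ Z1 - i1*m = Z2 - i2*m + d) \/
  (i1 = i2 + C + 1 /\ Z1 - i1*m = Z2 - i2*m + d - m).
Proof.
  intros Hm H1 H2 H3 H4.
  assert (E : (i1 - i2 - C) * m = (Z2 - i2*m) + d - (Z1 - i1*m)) by (subst; ring).
  remember (i1 - i2 - C) as D.
  destruct (Z.lt_ge_cases D 0) as [HD|HD].
  - assert (D * m <= - m) by nia. lia.
  - destruct (Z.lt_ge_cases D 2) as [HD2|HD2].
    + assert (D = 0 \/ D = 1) as [-> | ->] by lia; [left|right]; split; lia.
    + assert (D * m >= 2 * m) by nia. lia.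
Qed.

Local Lemma pow_split (n k : nat) : (k <= n)%nat -> (2^n = 2^k * 2^(n-k))%nat.
Proof. intros. rewrite <- Nat.pow_add_r. f_equal. lia. Qed.

Local Lemma pos_pow (r : nat) : (1 <= 2^r)%nat.
Proof. assert (2^r <> 0)%nat by (apply Nat.pow_nonzero; lia). lia. Qed.

Local Lemma B_align (n k x : nat) : (k <= n)%nat -> (x < 2^(n-k))%nat ->
  ssum (2^n - 2^(n-k) + x) = (ssum (2^n - 2^(n-k)) + ssum x)%nat.
Proof.
  intros Hk Hx.
  assert (E : (2^n - 2^(n-k) = (2^k - 1) * 2^(n-k))%nat).
  { rewrite Nat.mul_sub_distr_r, <- pow_split by auto. lia. }
  rewrite E. apply F_align. auto.
Qed.

Local Lemma DA (n m k : nat) (Z W : Z) : (k < n)%nat -> (k < m)%nat ->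
  cellP n m Z W ->
  cellP n m (Z - (Z.of_nat (2^n - 2^(n-k)) * Z.of_nat m + Z.of_nat k))
            (W - Z.of_nat (ssum (2^n - 2^(n-k)) + n + 1 - k)) -> False.
Proof.
  intros Hk Hkm [i0 [Hi0 [HZ [HWl HW]]]] [j0 [Hj0 [HZ' [HWl' HW']]]].
  set (P := (2^(n-k))%nat) in *. set (B := (2^n - P)%nat) in *.
  assert (HP : (P <= 2^n)%nat) by (apply Nat.pow_le_mono_r; lia).
  assert (HBP : (B + P = 2^n)%nat) by lia.
  assert (Hal : forall x, (x < P)%nat -> ssum (B + x) = (ssum B + ssum x)%nat)
    by (intros; apply B_align; lia).
  assert (Hs : forall j, (1 <= j)%nat -> (j < P)%nat -> (s_seq j <= n - k)%nat)
    by (intros; apply s_bound; auto).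
  assert (Hm : 0 < Z.of_nat m) by lia.
  destruct (idx (Z.of_nat m) (Z.of_nat i0) (Z.of_nat j0) (Z.of_nat B) (Z.of_nat k) Z
     (Z - (Z.of_nat B * Z.of_nat m + Z.of_nat k)) Hm HZ HZ' ltac:(ring) ltac:(lia))
     as [[Hd Hr]|[Hd Hr]].
  - assert (i0 = B + j0)%nat by lia. subst i0.
    destruct HW as [HW | [HS [HZc HWc]]].
    + rewrite Hal in HW by lia. lia.
    + replace (S (B + j0)) with (B + S j0)%nat in HWc by lia.
      rewrite Hal in HWc by lia. rewrite F_S in HWc.
      assert (s_seq (S j0) <= n - k)%nat by (apply Hs; lia). lia.
  - assert (i0 = B + S j0)%nat by lia. subst i0.
    destruct HW as [HW | [HS [HZc HWc]]].
    + rewrite Hal in HW by lia. rewrite F_S in HW.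
      assert (s_seq (S j0) <= n - k)%nat by (apply Hs; lia). lia.
    + lia.
Qed.

Local Lemma AA (n m a b : nat) (Z W : Z) : (a < b)%nat -> (b < n)%nat -> (b < m)%nat ->
  cellP n m (Z - (Z.of_nat (2^n - 2^(n-a)) * Z.of_nat m + Z.of_nat a))
            (W - Z.of_nat (ssum (2^n - 2^(n-a)) + n + 1 - a)) ->
  cellP n m (Z - (Z.of_nat (2^n - 2^(n-b)) * Z.of_nat m + Z.of_nat b))
            (W - Z.of_nat (ssum (2^n - 2^(n-b)) + n + 1 - b)) -> False.
Proof.
  intros Hab Hb Hbm [i1 [Hi1 [HZ1 [HWl1 HW1]]]] [i2 [Hi2 [HZ2 [HWl2 HW2]]]].
  set (Pa := (2^(n-a))%nat) in *. set (Pb := (2^(n-b))%nat) in *.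
  assert (HPa : (Pa <= 2^n)%nat) by (apply Nat.pow_le_mono_r; lia).
  assert (HPb : (Pb <= Pa)%nat) by (apply Nat.pow_le_mono_r; lia).
  assert (HPb1 : (Pb < Pa)%nat) by (apply Nat.pow_lt_mono_r; lia).
  set (C := (Pa - Pb)%nat).
  assert (HC : (2^n - Pb = (2^n - Pa) + C)%nat) by lia.
  assert (Hal : ssum (2^n - Pb) = (ssum (2^n - Pa) + ssum C)%nat)
    by (rewrite HC; pose proof (pos_pow (n-b)); apply B_align; [lia| unfold C, Pa, Pb in *; lia]).
  rewrite Hal in *. rewrite HC in *.
  assert (Hm : 0 < Z.of_nat m) by lia.
  destruct (idx (Z.of_nat m) (Z.of_nat i1) (Z.of_nat i2) (Z.of_nat C) (Z.of_nat (b - a))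
     _ _ Hm HZ1 HZ2 ltac:(rewrite (Nat2Z.inj_add (2^n - Pa)); lia) ltac:(lia))
     as [[Hd Hr]|[Hd Hr]].
  - assert (i1 = i2 + C)%nat by lia. subst i1.
    assert (Hs := F_sup i2 C).
    destruct HW2 as [HW2 | [HS [HZc HWc]]]; lia.
  - assert (i1 = S i2 + C)%nat by lia. subst i1.
    assert (Hs := F_sup (S i2) C). rewrite F_S in *.
    destruct HW2 as [HW2 | [HS [HZc HWc]]]; lia.
Qed.
Close Scope Z_scope.
Open Scope R_scope.

Local Lemma le_int (a z : Z) (u : R) : IZR a <= u -> u < IZR z + 1 -> (a <= z)%Z.
Proof. intros. assert (IZR a < IZR (z + 1)) by (rewrite plus_IZR; lra).
  apply lt_IZR in H1. lia. Qed.
Local Lemma lt_int (a z : Z) (u : R) : IZR z < u -> u <= IZR a -> (z < a)%Z.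
Proof. intros. apply lt_IZR. lra. Qed.

Local Lemma real_cell (n m : nat) (u v : R) (Z W : Z) : (1 <= m)%nat ->
  Dnm n m (u, v) -> IZR Z < u < IZR Z + 1 -> IZR W < v < IZR W + 1 -> cellP n m Z W.
Proof.
  intros Hm1 [i [[Hi [Hx Hy]] | [Hi [Hx Hy]]]] [Hu1 Hu2] [Hv1 Hv2]; simpl in Hx, Hy;
  destruct i as [|i0]; try lia; exists i0;
  unfold y_seq in Hy; rewrite Nat.sub_succ, Nat.sub_0_r in *; rewrite S_INR in Hx;
  rewrite !INR_IZR_INZ in Hx, Hy; rewrite ?(INR_IZR_INZ m) in Hx;
  destruct Hx as [Hx1 Hx2]; destruct Hy as [Hy1 Hy2];
  set (a := Z.of_nat i0) in *; set (b := Z.of_nat m) in *.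
  - assert (E1 : IZR (a*b) <= u) by (rewrite mult_IZR; lra).
    assert (E2 : u <= IZR (a*b+b)) by (rewrite plus_IZR, mult_IZR; lra).
    assert (E4 : v <= IZR (Z.of_nat (ssum i0) + 1)) by (rewrite plus_IZR; lra).
    assert (H1 := le_int _ _ _ E1 Hu2).
    assert (H2 := lt_int _ _ _ Hu1 E2).
    assert (H3 := le_int _ _ _ Hy1 Hv2).
    assert (H4 := lt_int _ _ _ Hv1 E4).
    split; [lia|]. split; [lia|]. split; [lia|]. left; lia.
  - pose proof (pos_pow n). replace (S (S i0) - 1)%nat with (S i0) in Hy2 by lia.
    assert (E1 : IZR (a*b+b-1) <= u) by (rewrite minus_IZR, plus_IZR, mult_IZR; lra).
    assert (E2 : u <= IZR (a*b+b)) by (rewrite plus_IZR, mult_IZR; lra).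
    assert (E3 : IZR (Z.of_nat (ssum i0) + 1) <= v) by (rewrite plus_IZR; lra).
    assert (E4 : v <= IZR (Z.of_nat (ssum (S i0)) + 1)) by (rewrite plus_IZR; lra).
    assert (H1 := le_int _ _ _ E1 Hu2).
    assert (H2 := lt_int _ _ _ Hu1 E2).
    assert (H3 := le_int _ _ _ E3 Hv2).
    assert (H4 := lt_int _ _ _ Hv1 E4).
    split; [lia|]. split; [lia|]. split; [lia|]. right; split; [lia|]. split; lia.
Qed.

Definition BB (n k : nat) : nat := (2^n - 2^(n-k))%nat.
Definition txn (n m i : nat) : nat := match i with O => O | S k => (BB n k * m + k)%nat end.
Definition tyn (n i : nat) : nat := match i with O => O | S k => (ssum (BB n k) + n + 1 - k)%nat end.

Local Lemma pair_cells (n m i j : nat) (Z W : Z) : (i < j)%nat -> (j <= n)%nat -> (n <= m)%nat ->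
  cellP n m (Z - Z.of_nat (txn n m i)) (W - Z.of_nat (tyn n i)) ->
  cellP n m (Z - Z.of_nat (txn n m j)) (W - Z.of_nat (tyn n j)) -> False.
Proof.
  intros Hij Hj Hnm H1 H2. destruct j as [|b]; [lia|].
  destruct i as [|a].
  - simpl in H1. rewrite !Z.sub_0_r in H1.
    simpl txn in H2. simpl tyn in H2. unfold BB in H2.
    rewrite Nat2Z.inj_add, Nat2Z.inj_mul in H2.
    eapply (DA n m b Z W); eauto; lia.
  - simpl txn in H1, H2. simpl tyn in H1, H2. unfold BB in H1, H2.
    rewrite Nat2Z.inj_add, Nat2Z.inj_mul in H1, H2.
    eapply (AA n m a b Z W); eauto; lia.
Qed.

Local Lemma pick1 (x eps : R) : 0 < eps -> exists (z : Z) (r : R),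
  IZR z < r < IZR z + 1 /\ 0 <= r - x <= eps / 2.
Proof.
  intros He. destruct (archimed x) as [Ha1 Ha2].
  exists (up x - 1)%Z, (x + Rmin (eps/2) ((IZR (up x) - x)/2)).
  rewrite minus_IZR.
  assert (Rmin (eps/2) ((IZR (up x) - x)/2) <= (IZR (up x) - x)/2) by apply Rmin_r.
  assert (Rmin (eps/2) ((IZR (up x) - x)/2) <= eps/2) by apply Rmin_l.
  assert (0 < Rmin (eps/2) ((IZR (up x) - x)/2)) by (apply Rmin_glb_lt; lra).
  repeat split; lra.
Qed.

Local Lemma pick (p : R * R) (eps : R) : 0 < eps -> exists (z w : Z) (q : R * R),
  (fst q - fst p)^2 + (snd q - snd p)^2 < eps^2 /\
  IZR z < fst q < IZR z + 1 /\ IZR w < snd q < IZR w + 1.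
Proof.
  intros He. destruct (pick1 (fst p) eps He) as [z [r [Hr1 Hr2]]].
  destruct (pick1 (snd p) eps He) as [w [s [Hs1 Hs2]]].
  exists z, w, (r, s). simpl. split; [|split; auto].
  nra.
Qed.

Local Lemma cell_of_translate (n m : nat) (tx ty : nat) (q : R * R) (z w : Z) : (1 <= m)%nat ->
  translate (Dnm n m) (INR tx, INR ty) q ->
  IZR z < fst q < IZR z + 1 -> IZR w < snd q < IZR w + 1 ->
  cellP n m (z - Z.of_nat tx) (w - Z.of_nat ty).
Proof.
  intros Hm H Hz Hw. unfold translate in H. simpl in H.
  eapply real_cell; eauto; rewrite minus_IZR, <- INR_IZR_INZ; lra.
Qed.

Local Lemma disj (n m i j : nat) (p : R * R) : (i < j)%nat -> (j <= n)%nat -> (n <= m)%nat -> (1 <= m)%nat ->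
  interior2 (translate (Dnm n m) (INR (txn n m i), INR (tyn n i))) p ->
  interior2 (translate (Dnm n m) (INR (txn n m j), INR (tyn n j))) p -> False.
Proof.
  intros Hij Hj Hnm Hm [e1 [He1 H1]] [e2 [He2 H2]].
  assert (He : 0 < Rmin e1 e2) by (apply Rmin_glb_lt; auto).
  destruct (pick p _ He) as [z [w [q [Hq [Hz Hw]]]]].
  assert (Hm1 : Rmin e1 e2 <= e1) by apply Rmin_l.
  assert (Hm2 : Rmin e1 e2 <= e2) by apply Rmin_r.
  assert (Q1 : translate (Dnm n m) (INR (txn n m i), INR (tyn n i)) q) by (apply H1; nra).
  assert (Q2 : translate (Dnm n m) (INR (txn n m j), INR (tyn n j)) q) by (apply H2; nra).
  apply (pair_cells n m i j z w); auto; eapply cell_of_translate; eauto.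
Qed.

Local Lemma touch (n m k : nat) : (k < n)%nat -> (n <= m)%nat ->
  exists p : R * R,
    translate (Dnm n m) (INR (txn n m 0), INR (tyn n 0)) p /\
    translate (Dnm n m) (INR (txn n m (S k)), INR (tyn n (S k))) p.
Proof.
  intros Hk Hnm.
  set (h := (2^(n-k-1))%nat).
  set (B := BB n k).
  assert (Hh : (2^(n-k) = 2 * h)%nat).
  { unfold h. rewrite <- Nat.pow_succ_r'. f_equal. lia. }
  assert (HP : (2^(n-k) <= 2^n)%nat) by (apply Nat.pow_le_mono_r; lia).
  assert (HB : (B + 2 * h = 2^n)%nat) by (unfold B, BB; lia).
  assert (Hh1 : (1 <= h)%nat) by apply pos_pow.
  set (I := (B + h)%nat).
  assert (HsI : ssum I = (ssum B + ssum h)%nat) by (apply B_align; lia).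
  assert (Hsh : ssum h = (ssum (h - 1) + (n - k))%nat).
  { replace h with (S (h-1)) at 1 by lia. rewrite F_S. replace (S (h-1)) with h by lia.
    unfold h. rewrite s_pow. lia. }
  exists (INR (I * m), INR (ssum I + 1)).
  split.
  - unfold translate. simpl fst; simpl snd. simpl txn; simpl tyn. simpl INR.
    rewrite !Rminus_0_r.
    exists I. right. split; [lia|].
    unfold in_conn, y_seq. simpl fst; simpl snd.
    replace (S I - 1)%nat with I by lia.
    assert (ssum (I - 1) <= ssum I)%nat by (apply F_mono; lia).
    apply le_INR in H.
    rewrite mult_INR, plus_INR. simpl (INR 1). lra.
  - unfold translate. simpl fst; simpl snd. simpl txn; simpl tyn. fold B.
    exists h. left. split; [lia|].
    unfold in_bar, y_seq. simpl fst; simpl snd.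
    assert (E1 : (I * m = B * m + h * m)%nat) by (unfold I; apply Nat.mul_add_distr_r).
    assert (E2 : (ssum I + 1 = (ssum B + n + 1 - k) + ssum (h - 1))%nat) by lia.
    rewrite E1, E2, !plus_INR, !mult_INR, minus_INR by lia.
    assert (INR k <= INR m) by (apply le_INR; lia).
    assert (0 <= INR (ssum (h-1))) by apply pos_INR.
    pose proof (pos_INR k). simpl (INR 1). split; split; nra.
Qed.

Theorem theorem3 (n m : nat) (hn : (2 <= n)%nat) (hm : (n <= m)%nat) :
  exists t : nat -> R * R,
    (forall i j : nat, (i <= n)%nat -> (j <= n)%nat -> i <> j ->
       forall p : R * R,
         ~ (interior2 (translate (Dnm n m) (t i)) p /\
            interior2 (translate (Dnm n m) (t j)) p)) /\
    (forall i : nat, (1 <= i <= n)%nat ->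
       exists p : R * R,
         translate (Dnm n m) (t 0%nat) p /\ translate (Dnm n m) (t i) p).
Proof.
  exists (fun i => (INR (txn n m i), INR (tyn n i))). split.
  - intros i j Hi Hj Hij p [H1 H2].
    destruct (Nat.lt_gt_cases i j) as [[Hl|Hl] _]. lia.
    + exact (disj n m i j p Hl Hj hm ltac:(lia) H1 H2).
    + exact (disj n m j i p Hl Hi hm ltac:(lia) H2 H1).
  - intros i Hi. destruct i as [|k]; [lia|]. apply touch; lia.
Qed.
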